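(* Let $p<1$, $p\neq0$. For $t\in[0,T]$ and $n\in\mathbb N$ let $\mathcal O^n_t=\{x\in\mathbb{R}^d:x^Tz\ge-1+\frac1n\ \forall z\in\mathbf S_t\}$ and define on $\mathbf S_t\times\mathcal O^n_t$ \[ \mathcal I(z,x)=\begin{cases}\dfrac{p^{-1}((1+x^Tz)^p-1)-x^Tz}{|z|^{2-\varepsilon}\wedge1},&|z|>0,\\ 0,&z=0.\end{cases} \] Then $\mathcal I$ is continuous, and there is a constant $C(n,\kappa_t)<\infty$ (depending on $n$ and $\kappa_t$) such that $\sup_{x\in\mathcal O^n_t}\sup_{z\ne\hat z\in\mathbf S_t}|\mathcal I(z,x)-\mathcal I(\hat z,x)|\le C(n,\kappa_t)|z-\hat z|^{\varepsilon\wedge1}$, $\sup_{z\in\mathbf S_t}\sup_{x\ne\hat x\in\mathcal O^n_t}|\mathcal I(z,x)-\mathcal I(z,\hat x)|\le C(n,\kappa_t)|x-\hat x|$, and $\sup_{(z,x)\in\mathbf S_t\times\mathcal O^n_t}|\mathcal I(z,x)|\le C(n,\kappa_t)$.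
   Context: Fix $T>0$, $d\ge1$, $\varepsilon\in(0,2]$. Let $\mathbb{S}^d_+$ be the symmetric positive definite $d\times d$ matrices, $\mathcal L$ the Lévy measures on $\mathbb{R}^d$, with $d^\varepsilon_{\mathcal L}(\mu,\nu)=\sup\int f\,d(\tilde\mu-\tilde\nu)$, $\tilde\mu(A)=\int_A(|z|^{2-\varepsilon}\wedge1)\mu(dz)$, sup over bounded continuous $f$ with $\sup_{z\neq\hat z}[|f(z)|\vee|f(z)-f(\hat z)|/|z-\hat z|^{\varepsilon\wedge1}]\le1$. $\mathcal C\subset\mathbb{R}^d\times\mathbb{S}^d_+\times\mathcal L$ is compact for $d_{\mathcal C}=|y-\hat y|\vee\|M-\hat M\|_2\vee d^\varepsilon_{\mathcal L}(\mu,\hat\mu)$; $\Theta:[0,T]\twoheadrightarrow\mathcal C$ is a weakly measurable correspondence with closed convex values. Assume $\mathbf S_t=\bigcup_{(y,M,\mu)\in\Theta_t}\mathrm{supp}(\mu)$ is closed, there is $\kappa_t>0$ with $\{|z|\le\kappa_t^{-1}\}\subseteq\mathrm{Conv}(\mathbf S_t\cup\{0\})\subseteq\{|z|\le\kappa_t\}$, and $|y|\vee\|M\|_2\vee d^\varepsilon_{\mathcal L}(\mu,0)\le\kappa_t$ for all $(y,M,\mu)\in\Theta_t$. *)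

(* Defs.v *)
From HB Require Import structures.
From mathcomp Require Import all_boot all_order all_algebra.
From mathcomp Require Import all_classical all_reals all_analysis.
Set Implicit Arguments. Unset Strict Implicit. Unset Printing Implicit Defensive.
Import Order.TTheory GRing.Theory Num.Theory.
Import numFieldNormedType.Exports.
Local Open Scope classical_set_scope.
Local Open Scope ring_scope.

Definition dotv {R : realType} {d : nat} (x z : 'rV[R]_d) : R :=
  \sum_(i < d) x 0 i * z 0 i.

Definition enorm {R : realType} {d : nat} (z : 'rV[R]_d) : R :=
  Num.sqrt (dotv z z).

Definition conv_hull {R : realType} {d : nat} (A : set 'rV[R]_d) : set 'rV[R]_d :=
  [set y | exists (k : nat) (w : 'I_k -> R) (a : 'I_k -> 'rV[R]_d),
     (forall i, 0 <= w i) /\ \sum_(i < k) w i = 1 /\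
     (forall i, A (a i)) /\ y = \sum_(i < k) w i *: a i].

Definition eball0 {R : realType} {d : nat} (r : R) : set 'rV[R]_d :=
  [set z | enorm z <= r].

Definition Oset {R : realType} {d : nat} (S : set 'rV[R]_d) (n : nat) : set 'rV[R]_d :=
  [set x | forall z, S z -> - 1 + n%:R^-1 <= dotv x z].

Definition Ifun {R : realType} {d : nat} (p eps : R) (z x : 'rV[R]_d) : R :=
  if z == 0 then 0
  else (p^-1 * (powR (1 + dotv x z) p - 1) - dotv x z)
       / Num.min (powR (enorm z) (2 - eps)) 1.

(* Main.v *)
Require Import Defs.
From HB Require Import structures.
From mathcomp Require Import all_boot all_order all_algebra.
From mathcomp Require Import all_classical all_reals all_analysis.
From mathcomp Require Import ring lra.
Set Implicit Arguments. Unset Strict Implicit. Unset Printing Implicit Defensive.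
Import Order.TTheory GRing.Theory Num.Theory.
Import numFieldNormedType.Exports.
Local Open Scope classical_set_scope.
Local Open Scope ring_scope.
Lemma powR_le_neg (R : realType) (a b q : R) : 0 < a -> a <= b -> q <= 0 ->
  b `^ q <= a `^ q.
Proof.
move=> a0 ab q0.
have b0 : 0 < b by apply: lt_le_trans ab.
have -> : q = - (- q) by rewrite opprK.
rewrite (powRN b) (powRN a) lef_pV2 ?posrE ?powR_gt0//.
by apply: (@ge0_ler_powR R (- q)); rewrite ?nnegrE ?oppr_ge0 ?(ltW a0) ?(ltW b0).
Qed.

Lemma powR_lip (R : realType) (q c s t : R) : q <= 1 -> 0 < c -> c <= s -> c <= t ->
  `|s `^ q - t `^ q| <= `|q| * c `^ (q - 1) * `|s - t|.
Proof.
move=> q1 c0.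
wlog st : s t / s <= t.
  move=> W cs ct; case: (leP s t) => h; first exact: W.
  by rewrite distrC (distrC s); apply: W => //; apply: ltW.
move=> cs ct.
have s0 : 0 < s by apply: lt_le_trans cs.
have hd : forall x, x \in `]s, t[ -> is_derive x 1 (fun y : R => y `^ q) (q * x `^ (q - 1)).
  move=> x hx; apply: is_derive1_powR; apply: lt_trans s0 _.
  by move: hx; rewrite in_itv /= => /andP[].
have hc : {within `[s, t], continuous (fun y : R => y `^ q)}.
  apply: derivable_within_continuous => x hx; apply: derivable_powR.
  rewrite in_itv /= andbT; apply: lt_le_trans s0 _.
  by move: hx; rewrite in_itv /= => /andP[].
rewrite distrC (distrC s t).
have [e he ->] := MVT_segment st hd hc.
move: he; rewrite in_itv /= => /andP[se et].
rewrite normrM normrM; apply: ler_pM => //.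
apply: ler_pM => //; rewrite ger0_norm ?powR_ge0//.
apply: powR_le_neg => //; first by apply: le_trans cs se.
by rewrite subr_le0.
Qed.

Definition phi (R : realType) (p u : R) := p^-1 * (powR (1 + u) p - 1) - u.

Lemma phi_lip (R : realType) (p c u v : R) : p < 1 -> p != 0 -> 0 < c -> c <= 1 ->
  c - 1 <= u -> c - 1 <= v ->
  `|phi p u - phi p v| <= `|p - 1| * c `^ (p - 2) * Num.max `|u| `|v| * `|u - v|.
Proof.
move=> p1 p0 c0 c1.
wlog uv : u v / u <= v.
  move=> W cu cv; case: (leP u v) => h; first exact: W.
  by rewrite distrC (distrC u) maxC; apply: W => //; apply: ltW.
move=> cu cv.
pose G : R -> R := (p^-1 \*: (fun y : R => y `^ p)) - (fun y : R => y).
have phiG : forall w, phi p w = G (1 + w) - G 1.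
  move=> w; rewrite /phi /G /= !fctE.
  have sc : forall y, (p^-1 \*: (fun y : R => y `^ p)) y = p^-1 * y `^ p by [].
  rewrite !sc powR1; ring.
have dG : forall x : R, 0 < x -> is_derive x 1 G (x `^ (p - 1) - 1).
  move=> x x0; apply: is_derive_eq.
    apply: is_deriveB. apply: is_deriveZ. exact: is_derive1_powR.
  by rewrite /GRing.scale /= mulrA mulVf // mul1r.
have a0 : 0 < 1 + u by apply: lt_le_trans c0 _; lra.
have hd : forall x : R, x \in `]1 + u, 1 + v[ -> is_derive x 1 G (x `^ (p - 1) - 1).
  move=> x hx; apply: dG; apply: lt_trans a0 _.
  by move: hx; rewrite in_itv /= => /andP[].
have hc : {within `[1 + u, 1 + v], continuous G}.
  apply: derivable_within_continuous => x hx.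
  have x0 : 0 < x.
    by apply: lt_le_trans a0 _; move: hx; rewrite in_itv /= => /andP[].
  by have [] := dG x x0.
have uv' : 1 + u <= 1 + v by lra.
rewrite distrC (distrC u) !phiG.
have -> : G (1 + v) - G 1 - (G (1 + u) - G 1) = G (1 + v) - G (1 + u) by ring.
have [e he ->] := MVT_segment uv' hd hc.
move: he; rewrite in_itv /= => /andP[ue ev].
have -> : 1 + v - (1 + u) = v - u by ring.
rewrite normrM; apply: ler_pM => //.
have -> : e `^ (p - 1) - 1 = e `^ (p - 1) - 1 `^ (p - 1) by rewrite powR1.
apply: le_trans (powR_lip _ c0 _ _) _; first by lra.
- by lra.
- by [].
have -> : p - 1 - 1 = p - 2 by ring.
apply: ler_wpM2l; first by rewrite mulr_ge0 ?powR_ge0.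
rewrite ler_norml; apply/andP; split.
  have hu : `|u| <= Num.max `|u| `|v| by rewrite le_max lexx.
  have := ler_norm (- u); rewrite normrN => h; lra.
have hv : `|v| <= Num.max `|u| `|v| by rewrite le_max lexx orbT.
have := ler_norm v => h; lra.
Qed.

Section V.
Context {R : realType} {d : nat}.
Implicit Types x z a b : 'rV[R]_d.

Lemma dotvC x z : dotv x z = dotv z x.
Proof. by rewrite /dotv; apply: eq_bigr => i _; rewrite mulrC. Qed.

Lemma dotvDr x a b : dotv x (a + b) = dotv x a + dotv x b.
Proof. by rewrite /dotv -big_split; apply: eq_bigr => i _; rewrite mxE mulrDr. Qed.

Lemma dotvZr x k a : dotv x (k *: a) = k * dotv x a.
Proof. by rewrite /dotv mulr_sumr; apply: eq_bigr => i _; rewrite mxE mulrCA. Qed.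

Lemma dotvNr x a : dotv x (- a) = - dotv x a.
Proof. by rewrite -scaleN1r dotvZr mulN1r. Qed.

Lemma dotvBr x a b : dotv x (a - b) = dotv x a - dotv x b.
Proof. by rewrite dotvDr dotvNr. Qed.

Lemma dotvDl x a b : dotv (a + b) x = dotv a x + dotv b x.
Proof. by rewrite dotvC dotvDr !(dotvC x). Qed.

Lemma dotvZl x k a : dotv (k *: a) x = k * dotv a x.
Proof. by rewrite dotvC dotvZr dotvC. Qed.

Lemma dotvBl x a b : dotv (a - b) x = dotv a x - dotv b x.
Proof. by rewrite dotvC dotvBr !(dotvC x). Qed.

Lemma dotv0r x : dotv x 0 = 0.
Proof. by rewrite /dotv big1 // => i _; rewrite mxE mulr0. Qed.

Lemma dotv_sumr x k (w : 'I_k -> R) (c : 'I_k -> 'rV[R]_d) :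
  dotv x (\sum_(i < k) w i *: c i) = \sum_(i < k) w i * dotv x (c i).
Proof.
elim: k w c => [|k IH] w c; first by rewrite !big_ord0 dotv0r.
by rewrite !big_ord_recr /= dotvDr IH dotvZr.
Qed.

Lemma dotv_ge0 z : 0 <= dotv z z.
Proof. by rewrite /dotv sumr_ge0 // => i _; rewrite -expr2 sqr_ge0. Qed.

Lemma dotv_eq0 z : dotv z z = 0 -> z = 0.
Proof.
move=> /eqP; rewrite /dotv psumr_eq0 => [/allP h|i _]; last by rewrite -expr2 sqr_ge0.
apply/rowP => i; rewrite mxE; apply/eqP.
have := h i (mem_index_enum _); rewrite implyTb -expr2 sqrf_eq0; exact.
Qed.

Lemma enorm_ge0 z : 0 <= enorm z.
Proof. exact: sqrtr_ge0. Qed.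

Lemma enorm_sq z : enorm z ^+ 2 = dotv z z.
Proof. by rewrite /enorm sqr_sqrtr // dotv_ge0. Qed.

Lemma enorm_gt0 z : z != 0 -> 0 < enorm z.
Proof.
move=> z0; rewrite /enorm sqrtr_gt0 lt_def dotv_ge0 andbT.
by apply/eqP => /dotv_eq0 /eqP; rewrite (negPf z0).
Qed.

Lemma enorm0 : enorm (0 : 'rV[R]_d) = 0.
Proof. by rewrite /enorm dotv0r sqrtr0. Qed.

Lemma CS x z : `|dotv x z| <= enorm x * enorm z.
Proof.
have [->|z0] := eqVneq z 0; first by rewrite dotv0r enorm0 normr0 mulr0.
set A := dotv x x; set B := dotv z z; set u := dotv x z.
have B0 : 0 < B by rewrite /B -enorm_sq exprn_gt0 // enorm_gt0.
have h : 0 <= dotv (B *: x - u *: z) (B *: x - u *: z) by apply: dotv_ge0.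
rewrite !(dotvBl, dotvBr, dotvZl, dotvZr) -/A -/B -/u (dotvC z x) -/u in h.
have h2 : u ^+ 2 <= A * B.
  have : 0 <= B * (A * B - u ^+ 2) by rewrite -[X in _ <= X]opprK; nra.
  by rewrite pmulr_rge0 // subr_ge0.
rewrite /enorm -sqrtrM ?dotv_ge0 // -/A -/B -sqrtr_sqr ler_sqrt //.
by rewrite mulr_ge0 // /A /B dotv_ge0.
Qed.

Lemma enormZ k z : enorm (k *: z) = `|k| * enorm z.
Proof.
by rewrite /enorm dotvZl dotvZr mulrA -expr2 sqrtrM ?sqr_ge0 // sqrtr_sqr.
Qed.

Lemma enormN z : enorm (- z) = enorm z.
Proof. by rewrite -scaleN1r enormZ normrN normr1 mul1r. Qed.

Lemma enormB a b : enorm (a - b) = enorm (b - a).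
Proof. by rewrite -enormN opprB. Qed.

Lemma enormD a b : enorm (a + b) <= enorm a + enorm b.
Proof.
have h : dotv (a + b) (a + b) <= (enorm a + enorm b) ^+ 2.
  rewrite !(dotvDl, dotvDr) (dotvC b a) sqrrD !enorm_sq.
  have := CS a b; rewrite ler_norml => /andP[_ h]; lra.
rewrite /enorm -[X in _ <= X]ger0_norm ?addr_ge0 ?enorm_ge0 //.
by rewrite -sqrtr_sqr ler_sqrt // sqr_ge0.
Qed.

Lemma enorm_le_norm z : enorm z <= d%:R * `|z|.
Proof.
have hi : forall i, `|z 0 i| <= `|z|.
  move=> i; rewrite [leRHS]/Num.norm /= mx_normrE; apply/bigmax_geP; right => /=.
  by exists (0, i).
have h : dotv z z <= (d%:R * `|z|) ^+ 2.
  apply: (@le_trans _ _ (\sum_(i < d) `|z| ^+ 2)).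
    rewrite /dotv; apply: ler_sum => i _; rewrite -expr2 -real_normK ?num_real //.
    by rewrite lerXn2r ?nnegrE.
  rewrite sumr_const card_ord exprMn.
  have -> : `|z| ^+ 2 *+ d = d%:R * `|z| ^+ 2 by rewrite mulr_natl.
  apply: ler_wpM2r; first exact: sqr_ge0.
  case: d z hi => [|k] z hi; first by rewrite expr0n.
  by rewrite expr2 ler_peMr // ler1n.
rewrite /enorm -[X in _ <= X]ger0_norm ?mulr_ge0 //.
by rewrite -sqrtr_sqr ler_sqrt // sqr_ge0.
Qed.

End V.

Lemma S_bound (R : realType) (d : nat) (S : set 'rV[R]_d) (K : R) z :
  conv_hull (S `|` [set 0]) `<=` eball0 K -> S z -> enorm z <= K.
Proof.
move=> h Sz; apply: (h z); exists 1%N, (fun _ => 1), (fun _ => z).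
split; first by move=> _; exact: ler01.
split; first by rewrite big_ord1.
split; first by move=> _; left.
by rewrite big_ord1 scale1r.
Qed.

Lemma O_bound (R : realType) (d : nat) (S : set 'rV[R]_d) (K : R) (n : nat) x :
  (0 < n)%N -> 0 < K -> eball0 K^-1 `<=` conv_hull (S `|` [set 0]) ->
  Oset S n x -> enorm x <= K.
Proof.
move=> n0 K0 hb Ox.
have [->|x0] := eqVneq x 0; first by rewrite enorm0 ltW.
have ex0 := enorm_gt0 x0.
set y := (- (K * enorm x)^-1) *: x.
have ey : enorm y = K^-1.
  rewrite /y enormZ normrN ger0_norm ?invr_ge0 ?mulr_ge0 ?enorm_ge0 ?ltW //.
  by rewrite invfM -mulrA mulVf ?mulr1 // gt_eqF.
have [k [w [a [w0 [w1 [aS ya]]]]]] : conv_hull (S `|` [set 0]) y.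
  by apply: hb; rewrite /eball0 /= ey.
pose L : R := -1 + n%:R^-1.
have L0 : L <= 0.
  rewrite /L addrC subr_le0 invf_le1 ?ler1n ?ltr0n //.
have hL : L <= dotv x y.
  rewrite ya dotv_sumr.
  apply: (@le_trans _ _ (\sum_(i < k) w i * L)).
    by rewrite -mulr_suml w1 mul1r.
  apply: ler_sum => i _; apply: ler_wpM2l => //.
  case: (aS i) => [Sa|/= ->]; first exact: Ox.
  by rewrite dotv0r.
have : dotv x y = - (enorm x / K).
  rewrite /y dotvZr -enorm_sq invfM mulNr; congr (- _).
  by field; rewrite !gt_eqF.
move=> e; rewrite e in hL.
have n1 : 0 <= n%:R^-1 :> R by rewrite invr_ge0 ler0n.
have : enorm x / K <= 1 by rewrite /L in hL; lra.
by rewrite ler_pdivrMr // mul1r.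
Qed.

Lemma powR1x (R : realType) (x : R) : 1 `^ x = 1.
Proof. by rewrite powR1. Qed.

Definition mm (R : realType) (eps Z : R) := Num.min (Z `^ (2 - eps)) 1.

Lemma mm_le1 (R : realType) (eps Z : R) : 0 <= Z -> Z <= 1 -> eps <= 2 ->
  mm eps Z = Z `^ (2 - eps).
Proof.
move=> Z0 Z1 e2; rewrite /mm; apply/min_idPl.
rewrite -{2}(powR1x (2 - eps)).
by apply: (@ge0_ler_powR R (2 - eps)); rewrite ?nnegrE ?subr_ge0.
Qed.

Lemma mm_gt1 (R : realType) (eps Z : R) : 1 < Z -> eps <= 2 -> mm eps Z = 1.
Proof.
move=> Z1 e2; rewrite /mm; apply/min_idPr.
rewrite -{1}(powR1x (2 - eps)).
apply: (@ge0_ler_powR R (2 - eps)); rewrite ?nnegrE ?subr_ge0 //.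
all: try (by apply: ltW); try lra.
Qed.

Lemma mm_gt0 (R : realType) (eps Z : R) : 0 < Z -> 0 < mm eps Z.
Proof. by move=> Z0; rewrite /mm lt_min powR_gt0 ?ltr01. Qed.

Lemma Zsplit (R : realType) (eps Z : R) : 0 < Z -> Z `^ (2 - eps) * Z `^ eps = Z ^+ 2.
Proof.
move=> Z0; rewrite -powRD; last by rewrite (gt_eqF Z0) implybT.
rewrite subrK -(powR_mulrn 2 (ltW Z0)).
by [].
Qed.

Lemma sq_over_m (R : realType) (eps Z K : R) : 0 < Z -> Z <= K -> 0 < eps -> eps <= 2 ->
  Z ^+ 2 / mm eps Z <= 1 + K ^+ 2.
Proof.
move=> Z0 ZK e0 e2; have [Z1|Z1] := leP Z 1.
  rewrite mm_le1 ?(ltW Z0) // -(Zsplit eps Z0) mulrC mulKf ?gt_eqF ?powR_gt0 //.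
  have : Z `^ eps <= 1.
    rewrite -(powR1x eps); apply: (@ge0_ler_powR R eps); rewrite ?nnegrE //; try lra.
  have : 0 <= K ^+ 2 by apply: sqr_ge0.
  lra.
rewrite mm_gt1 // divr1.
have : Z ^+ 2 <= K ^+ 2 by rewrite lerXn2r ?nnegrE //; lra.
lra.
Qed.

Lemma Hcore (R : realType) (eps Z K dl : R) : 0 < dl -> dl <= 2 * Z -> Z <= K ->
  0 < eps -> eps <= 2 ->
  dl * Z / mm eps Z <= (2 + K * (2 * K) `^ (1 - Num.min eps 1)) * dl `^ (Num.min eps 1).
Proof.
move=> d0 dZ ZK e0 e2.
have Z0 : 0 < Z by lra.
have K0 : 0 < K by lra.
set a := Num.min eps 1.
have a1 : a <= 1 by rewrite /a ge_min lexx orbT.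
have a0 : 0 < a by rewrite /a lt_min e0 ltr01.
have dsplit : dl = dl `^ a * dl `^ (1 - a).
  by rewrite -powRD ?(gt_eqF d0) ?implybT // subrKC powRr1 // ltW.
have d1 : dl `^ (1 - a) <= (2 * K) `^ (1 - a).
  apply: (@ge0_ler_powR R (1 - a)); rewrite ?nnegrE; lra.
have KP : 0 <= K * (2 * K) `^ (1 - a) by rewrite mulr_ge0 ?powR_ge0 //; lra.
have da : 0 <= dl `^ a by apply: powR_ge0.
have [Z1|Z1] := leP Z 1; last first.
  rewrite mm_gt1 // divr1.
  have : dl * Z <= dl * K by apply: ler_wpM2l; lra.
  have : dl * K <= K * (2 * K) `^ (1 - a) * dl `^ a.
    have h := ler_wpM2l (mulr_ge0 (ltW K0) da) d1.
    rewrite {1}dsplit.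
    have -> : dl `^ a * dl `^ (1 - a) * K = K * dl `^ a * dl `^ (1 - a) by ring.
    apply: le_trans h _; rewrite le_eqVlt; apply/orP; left; apply/eqP; ring.
  nra.
rewrite mm_le1 //; last lra.
have -> : dl * Z / Z `^ (2 - eps) = dl * Z `^ (eps - 1).
  rewrite -mulrA; congr (_ * _).
  have -> : eps - 1 = 1 - (2 - eps) by ring.
  by rewrite (@powRB R Z 1 (2 - eps)) ?(gt_eqF Z0) ?implybT // powRr1 // ltW.
have [e1|e1] := leP 1 eps.
  have ea : a = 1 by rewrite /a; apply/min_idPr.
  rewrite ea in KP |- *; rewrite powRr1; last lra.
  have : Z `^ (eps - 1) <= 1.
    have h := @ge0_ler_powR R (eps - 1) ltac:(lra) Z 1 ltac:(rewrite nnegrE; lra)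
      ltac:(rewrite nnegrE; lra) Z1.
    by rewrite powR1x in h.
  have : 0 <= Z `^ (eps - 1) by apply: powR_ge0.
  nra.
have ea : a = eps by rewrite /a; apply/min_idPl; lra.
rewrite ea in da KP |- *.
pose t := dl / 2.
have t0 : 0 < t by rewrite /t; lra.
have tZ : t <= Z by rewrite /t; lra.
have h1 : Z `^ (eps - 1) <= t `^ (eps - 1) by apply: powR_le_neg => //; lra.
have h2 : dl * t `^ (eps - 1) = 2 * t `^ eps.
  have -> : dl = 2 * t by rewrite /t; field.
  by rewrite -mulrA mulr_powRB1 // ltW.
have h3 : t `^ eps <= dl `^ eps.
  by apply: (@ge0_ler_powR R eps); rewrite ?nnegrE /t; lra.
have : dl * Z `^ (eps - 1) <= dl * t `^ (eps - 1) by apply: ler_wpM2l; lra.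
nra.
Qed.
Lemma T2 (R : realType) (eps Z Zh dl : R) : 0 < Zh -> Zh <= Z -> Z - Zh <= dl ->
  0 < eps -> eps <= 2 ->
  Zh ^+ 2 * `|(mm eps Z)^-1 - (mm eps Zh)^-1| <= 2 * (dl * Z / mm eps Z).
Proof.
move=> Zh0 ZhZ Zdl e0 e2.
have Z0 : 0 < Z by lra.
have dl0 : 0 <= dl by lra.
have R0 : 0 <= 2 * (dl * Z / mm eps Z).
  apply: mulr_ge0; first lra.
  by apply: divr_ge0; [nra | exact: ltW (mm_gt0 _ Z0)].
have [Zh1|Zh1] := leP Zh 1; last first.
  have -> : `|(mm eps Z)^-1 - (mm eps Zh)^-1| = 0.
    by rewrite (mm_gt1 Zh1 e2) (mm_gt1 (lt_le_trans Zh1 ZhZ) e2) subrr normr0.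
  by rewrite mulr0.
have Ehle : Zh `^ eps <= 1.
  have h := @ge0_ler_powR R eps ltac:(lra) Zh 1 ltac:(rewrite nnegrE; lra)
      ltac:(rewrite nnegrE; lra) Zh1.
  by rewrite powR1x in h.
have E0 : 0 < Zh `^ eps by apply: powR_gt0.
have b0 : 0 < Zh `^ (2 - eps) by apply: powR_gt0.
have hb := Zsplit eps Zh0.
have [Z1|Z1] := leP Z 1; last first.
  rewrite (mm_gt1 Z1) // (mm_le1 (ltW Zh0) Zh1 e2) invr1.
  set b := Zh `^ (2 - eps) in b0 hb *; set E := Zh `^ eps in Ehle E0 hb *.
  have b1 : b <= 1 by rewrite /b -(mm_le1 (ltW Zh0) Zh1 e2) /mm ge_min lexx orbT.
  have -> : `|1 - b^-1| = b^-1 - 1.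
    rewrite ler0_norm ?opprB // subr_le0 invf_ge1 //.
  rewrite -hb mulr1.
  have -> : b * E * (b^-1 - 1) = E - b * E by field; rewrite gt_eqF.
  rewrite hb; nra.
rewrite (mm_le1 (ltW Z0) Z1 e2) (mm_le1 (ltW Zh0) Zh1 e2).
have A0 : 0 < Z `^ (2 - eps) by apply: powR_gt0.
have F0 : 0 < Z `^ eps by apply: powR_gt0.
have hA := Zsplit eps Z0.
pose r := Zh / Z.
have r0 : 0 < r by rewrite /r divr_gt0.
have r1 : r <= 1 by rewrite /r ler_pdivrMr // mul1r.
have Zhr : Zh = r * Z by rewrite /r divfK // gt_eqF.
have hs : Zh `^ (2 - eps) = r `^ (2 - eps) * Z `^ (2 - eps).
  by rewrite Zhr powRM // ltW.
have s2 : r ^+ 2 <= r `^ (2 - eps).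
  rewrite -(powR_mulrn 2 (ltW r0)).
  by apply: ger_powR; rewrite ?r0 ?r1 //; lra.
have EF : Zh `^ eps <= Z `^ eps.
  by apply: (@ge0_ler_powR R eps); rewrite ?nnegrE; lra.
set A := Z `^ (2 - eps) in A0 hA hs *; set F := Z `^ eps in F0 hA EF *.
set b := Zh `^ (2 - eps) in b0 hb hs *; set E := Zh `^ eps in Ehle E0 hb EF *.
set s := r `^ (2 - eps) in hs s2 *.
have s0 : 0 < s by rewrite /s powR_gt0.
have s1 : s <= 1.
  have h := @ge0_ler_powR R (2 - eps) ltac:(lra) r 1 ltac:(rewrite nnegrE; lra)
      ltac:(rewrite nnegrE; lra) r1.
  by rewrite powR1x in h.
have -> : `|A^-1 - b^-1| = b^-1 - A^-1.
  rewrite ler0_norm ?opprB // subr_le0 lef_pV2 ?posrE // hs.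
  rewrite -[X in _ <= X]mul1r; apply: ler_wpM2r; first lra.
  have h := @ge0_ler_powR R (2 - eps) ltac:(lra) r 1 ltac:(rewrite nnegrE; lra)
      ltac:(rewrite nnegrE; lra) r1.
  by rewrite powR1x in h.
rewrite -hb hs.
have -> : s * A * E * ((s * A)^-1 - A^-1) = E * (1 - s) by field; rewrite !gt_eqF.
have -> : 2 * (dl * Z / A) = 2 * dl * F / Z.
  have Aeq : A = Z ^+ 2 / F by rewrite -hA mulfK // gt_eqF.
  rewrite Aeq; field; rewrite !gt_eqF //.
rewrite ler_pdivlMr //.
have h1 : E * (1 - s) <= F * (1 - r ^+ 2).
  apply: ler_pM; lra.
have h2 : (1 - r ^+ 2) * Z <= 2 * dl.
  have : (1 - r) * Z <= dl by rewrite mulrBl mul1r -Zhr.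
  nra.
nra.
Qed.


Lemma phi0 (R : realType) (p : R) : phi p 0 = 0.
Proof. by rewrite /phi addr0 powR1x subrr mulr0 subr0. Qed.

Lemma phi_sq (R : realType) (p c u : R) : p < 1 -> p != 0 -> 0 < c -> c <= 1 ->
  c - 1 <= u -> `|phi p u| <= `|p - 1| * c `^ (p - 2) * u ^+ 2.
Proof.
move=> p1 p0 c0 c1 cu.
have := phi_lip p1 p0 c0 c1 cu (_ : c - 1 <= 0); rewrite phi0 subr0 normr0.
have -> : Num.max `|u| 0 = `|u| by apply/max_idPl.
move=> h; have : c - 1 <= 0 by lra. move=> /h; rewrite subr0 -mulrA -real_normK ?num_real // expr2.
Qed.

Lemma Ifun_phi (R : realType) (d : nat) (p eps : R) (z x : 'rV[R]_d) : z != 0 ->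
  Ifun p eps z x = phi p (dotv x z) / mm eps (enorm z).
Proof. by move=> z0; rewrite /Ifun (negPf z0). Qed.

Lemma M_ge0 (R : realType) (p c : R) : 0 <= `|p - 1| * c `^ (p - 2).
Proof. by rewrite mulr_ge0 ?powR_ge0. Qed.

Lemma u_bound (R : realType) (d : nat) (K : R) (x z : 'rV[R]_d) :
  enorm x <= K -> `|dotv x z| <= K * enorm z.
Proof.
move=> xK; apply: le_trans (CS x z) _; apply: ler_wpM2r => //; exact: enorm_ge0.
Qed.

Lemma I_bound (R : realType) (d : nat) (p eps K c : R) (z x : 'rV[R]_d) :
  p < 1 -> p != 0 -> 0 < c -> c <= 1 -> 0 < eps -> eps <= 2 ->
  enorm x <= K -> enorm z <= K -> c - 1 <= dotv x z ->
  `|Ifun p eps z x| <= `|p - 1| * c `^ (p - 2) * K ^+ 2 * (1 + K ^+ 2).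
Proof.
move=> p1 p0 c0 c1 e0 e2 xK zK cu.
have M0 := M_ge0 p c.
have K0 : 0 <= K by apply: le_trans (enorm_ge0 z) zK.
have [->|z0] := eqVneq z 0.
  rewrite /Ifun eqxx normr0; have := sqr_ge0 K => hK.
  by apply: mulr_ge0; [apply: mulr_ge0 | lra].
have Z0 := enorm_gt0 z0.
rewrite Ifun_phi //.
have h1 := phi_sq p1 p0 c0 c1 cu.
have h2 : (dotv x z) ^+ 2 <= K ^+ 2 * enorm z ^+ 2.
  rewrite -exprMn -real_normK ?num_real //; apply: lerXn2r; rewrite ?nnegrE ?normr_ge0 //.
    by rewrite mulr_ge0 // enorm_ge0.
  exact: u_bound.
have h3 := sq_over_m Z0 zK e0 e2.
set m := mm eps (enorm z) in h3 *.
have m0 : 0 < m by apply: mm_gt0.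
rewrite normrM normfV (gtr0_norm m0) ler_pdivrMr //.
apply: le_trans h1 _.
have h4 : dotv x z ^+ 2 <= K ^+ 2 * (1 + K ^+ 2) * m.
  rewrite ler_pdivrMr // in h3.
  apply: le_trans h2 _; rewrite -mulrA; apply: ler_wpM2l; first exact: sqr_ge0.
  by [].
apply: le_trans (ler_wpM2l M0 h4) _.
by rewrite !mulrA.
Qed.

Lemma I_lipx (R : realType) (d : nat) (p eps K c : R) (z x xh : 'rV[R]_d) :
  p < 1 -> p != 0 -> 0 < c -> c <= 1 -> 0 < eps -> eps <= 2 ->
  enorm x <= K -> enorm xh <= K -> enorm z <= K ->
  c - 1 <= dotv x z -> c - 1 <= dotv xh z ->
  `|Ifun p eps z x - Ifun p eps z xh| <=
    `|p - 1| * c `^ (p - 2) * K * (1 + K ^+ 2) * enorm (x - xh).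
Proof.
move=> p1 p0 c0 c1 e0 e2 xK xhK zK cu cv.
have M0 := M_ge0 p c.
have K0 : 0 <= K by apply: le_trans (enorm_ge0 z) zK.
have e0' := enorm_ge0 (x - xh).
have [->|z0] := eqVneq z 0.
  rewrite /Ifun eqxx subrr normr0; have := sqr_ge0 K => hK.
  by apply: mulr_ge0 => //; apply: mulr_ge0; [apply: mulr_ge0 | lra].
have Z0 := enorm_gt0 z0.
rewrite !Ifun_phi // -mulrBl.
have h3 := sq_over_m Z0 zK e0 e2.
set m := mm eps (enorm z) in h3 *.
have m0 : 0 < m by apply: mm_gt0.
rewrite ler_pdivrMr // in h3.
rewrite normrM normfV (gtr0_norm m0) ler_pdivrMr //.
apply: le_trans (phi_lip p1 p0 c0 c1 cu cv) _.
have hmx : Num.max `|dotv x z| `|dotv xh z| <= K * enorm z.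
  by rewrite ge_max !u_bound.
have hdu : `|dotv x z - dotv xh z| <= enorm (x - xh) * enorm z.
  by rewrite -dotvBl; apply: le_trans (CS _ _) _.
have h4 : Num.max `|dotv x z| `|dotv xh z| * `|dotv x z - dotv xh z| <=
    K * (1 + K ^+ 2) * enorm (x - xh) * m.
  apply: le_trans (ler_pM _ _ hmx hdu) _; rewrite ?le_max ?normr_ge0 //.
  have -> : K * enorm z * (enorm (x - xh) * enorm z) = (K * enorm (x - xh)) * enorm z ^+ 2.
    by rewrite expr2; ring.
  have -> : K * (1 + K ^+ 2) * enorm (x - xh) * m = (K * enorm (x - xh)) * ((1 + K ^+ 2) * m).
    by ring.
  by apply: ler_wpM2l => //; apply: mulr_ge0.
apply: le_trans (_ : _ <= `|p - 1| * c `^ (p - 2) * (K * (1 + K ^+ 2) * enorm (x - xh) * m)) _.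
  by rewrite -mulrA; apply: ler_wpM2l.
by rewrite !mulrA.
Qed.

Lemma I_holder (R : realType) (d : nat) (p eps K c : R) (x z zh : 'rV[R]_d) :
  p < 1 -> p != 0 -> 0 < c -> c <= 1 -> 0 < eps -> eps <= 2 ->
  enorm x <= K -> enorm z <= K -> enorm zh <= K ->
  c - 1 <= dotv x z -> c - 1 <= dotv x zh ->
  `|Ifun p eps z x - Ifun p eps zh x| <=
    3 * (`|p - 1| * c `^ (p - 2) * K ^+ 2 * (2 + K * (2 * K) `^ (1 - Num.min eps 1)))
    * enorm (z - zh) `^ (Num.min eps 1).
Proof.
move=> p1 p0 c0 c1 e0 e2 xK.
wlog ZZ : z zh / enorm zh <= enorm z.
  move=> W zK zhK cu cv; case: (leP (enorm zh) (enorm z)) => h; first exact: W.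
  by rewrite distrC enormB; apply: W => //; apply: ltW.
move=> zK zhK cu cv.
have M0 := M_ge0 p c.
set M := `|p - 1| * c `^ (p - 2) in M0 *.
have K0 : 0 <= K by apply: le_trans (enorm_ge0 z) zK.
set a := Num.min eps 1.
set H := 2 + K * (2 * K) `^ (1 - a).
have H0 : 0 <= H.
  by rewrite /H; apply: addr_ge0; [lra | apply: mulr_ge0 => //; exact: powR_ge0].
have RHS0 : forall v : 'rV[R]_d, 0 <= 3 * (M * K ^+ 2 * H) * enorm v `^ a.
  by move=> v; rewrite !mulr_ge0 ?powR_ge0 ?sqr_ge0.
have [<-|zzh] := eqVneq z zh; first by rewrite subrr normr0.
have dz0 : z - zh != 0 by rewrite subr_eq0.
have D0 := enorm_gt0 dz0.
set D := enorm (z - zh) in D0 RHS0 *.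
have z0 : z != 0.
  apply/eqP => z0; move: zzh; rewrite z0 eq_sym; apply/negP/negPn/eqP.
  apply/eqP; apply: contraT => zh0; have := enorm_gt0 zh0.
  by rewrite z0 enorm0 in ZZ; lra.
have Z0 := enorm_gt0 z0.
have hD1 : D <= 2 * enorm z.
  have := enormD z (- zh); rewrite enormN -/D; lra.
have hD2 : enorm z - enorm zh <= D.
  have := enormD (z - zh) zh; rewrite subrK -/D; lra.
have hH := Hcore D0 hD1 zK e0 e2.
set m := mm eps (enorm z) in hH *.
have m0 : 0 < m by apply: mm_gt0.
set B := D * enorm z / m in hH *.
have B0 : 0 <= B by rewrite /B divr_ge0 ?mulr_ge0 // ?ltW //.
have MK0 : 0 <= M * K ^+ 2 by rewrite mulr_ge0 ?sqr_ge0.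
suff : `|Ifun p eps z x - Ifun p eps zh x| <= 3 * (M * K ^+ 2) * B.
  move=> h; apply: le_trans h _.
  have h3 : 0 <= 3 * (M * K ^+ 2) by rewrite mulr_ge0.
  by apply: le_trans (ler_wpM2l h3 hH) _; rewrite !mulrA.
have [zh0|zh0] := eqVneq zh 0.
  have DZ : D = enorm z by rewrite /D zh0 subr0.
  rewrite zh0 {2}/Ifun eqxx subr0 Ifun_phi //.
  rewrite normrM normfV (gtr0_norm m0) ler_pdivrMr //.
  apply: le_trans (phi_sq p1 p0 c0 c1 cu) _.
  have h2 : (dotv x z) ^+ 2 <= K ^+ 2 * enorm z ^+ 2.
    rewrite -exprMn -real_normK ?num_real //; apply: lerXn2r; rewrite ?nnegrE ?normr_ge0 //.
      by rewrite mulr_ge0 // enorm_ge0.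
    exact: u_bound.
  have -> : 3 * (M * K ^+ 2) * B * m = 3 * (M * (K ^+ 2 * enorm z ^+ 2)).
    by rewrite /B DZ; field; rewrite gt_eqF.
  apply: le_trans (ler_wpM2l M0 h2) _.
  have : 0 <= M * (K ^+ 2 * enorm z ^+ 2) by apply: mulr_ge0 => //; apply: mulr_ge0; exact: sqr_ge0.
  lra.
have Zh0 := enorm_gt0 zh0.
rewrite !Ifun_phi //.
set mh := mm eps (enorm zh).
have mh0 : 0 < mh by apply: mm_gt0.
set u := dotv x z in cu *; set uh := dotv x zh in cv *.
have -> : phi p u / m - phi p uh / mh =
    (phi p u - phi p uh) / m + phi p uh * (m^-1 - mh^-1) by ring.
apply: le_trans (ler_normD _ _) _.
have T1 : `|(phi p u - phi p uh) / m| <= M * K ^+ 2 * B.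
  rewrite normrM normfV (gtr0_norm m0).
  have hmx : Num.max `|u| `|uh| <= K * enorm z.
    rewrite ge_max !u_bound //=; apply: le_trans (u_bound zh xK) _.
    by apply: ler_wpM2l.
  have hdu : `|u - uh| <= K * D by rewrite /u /uh -dotvBr u_bound.
  have h1 := phi_lip p1 p0 c0 c1 cu cv.
  have h4 : Num.max `|u| `|uh| * `|u - uh| <= K * enorm z * (K * D).
    by apply: ler_pM; rewrite ?le_max ?normr_ge0.
  have h5 := ler_wpM2l M0 h4.
  rewrite -/M -mulrA in h1.
  have h6 := le_trans h1 h5.
  have mi : 0 <= m^-1 by rewrite invr_ge0 ltW.
  have := ler_wpM2r mi h6.
  move=> h7; apply: le_trans h7 _; rewrite le_eqVlt; apply/orP; left; apply/eqP.
  by rewrite /B; field; rewrite (gt_eqF m0).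
have T2' : `|phi p uh * (m^-1 - mh^-1)| <= M * K ^+ 2 * (2 * B).
  rewrite normrM.
  have h1 := phi_sq p1 p0 c0 c1 cv.
  have h2 : uh ^+ 2 <= K ^+ 2 * enorm zh ^+ 2.
    rewrite -exprMn -real_normK ?num_real //; apply: lerXn2r; rewrite ?nnegrE ?normr_ge0 //.
      by rewrite mulr_ge0 // enorm_ge0.
    exact: u_bound.
  have h3 := T2 Zh0 ZZ hD2 e0 e2.
  rewrite -/m -/mh -/D -/B in h3.
  apply: le_trans (ler_wpM2r (normr_ge0 _) h1) _.
  rewrite -/M.
  apply: le_trans (ler_wpM2r (normr_ge0 _) (ler_wpM2l M0 h2)) _.
  rewrite -mulrA -mulrA; apply: ler_wpM2l => //; rewrite -mulrA; apply: ler_wpM2l; first exact: sqr_ge0.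
  by [].
have : 0 <= M * K ^+ 2 * B by rewrite mulr_ge0.
lra.
Qed.

Lemma cont_lemma (R : realType) (d : nat) (A : set ('rV[R]_d * 'rV[R]_d))
  (f : 'rV[R]_d * 'rV[R]_d -> R) (Ch Cl a : R) :
  (1 <= d)%N -> 0 <= Ch -> 0 <= Cl -> 0 < a ->
  (forall w w', A w -> A w' ->
     `|f w - f w'| <= Ch * enorm (w.1 - w'.1) `^ a + Cl * enorm (w.2 - w'.2)) ->
  {within A, continuous f}.
Proof.
move=> d1 Ch0 Cl0 a0 hb.
apply/subspace_continuousP => w Aw.
apply/cvgrPdist_lt => e e0.
pose Ct := Ch + Cl + 1.
have Ct0 : 0 < Ct by rewrite /Ct; lra.
pose b := e / (2 * Ct).
have b0 : 0 < b by rewrite /b divr_gt0 // mulr_gt0 // ltr0n.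
pose rho := Num.min b (b `^ a^-1).
have rho0 : 0 < rho by rewrite /rho lt_min b0 powR_gt0.
have d0 : 0 < d%:R :> R by rewrite ltr0n.
pose r := rho / d%:R.
have r0 : 0 < r by rewrite /r divr_gt0.
have hball := nbhsx_ballx w r r0.
rewrite near_withinE; near=> t => At.
have bt : ball w r t by near: t; exact: hball.
case: bt => b1 b2.
rewrite -ball_normE /= in b1 b2.
have hE : forall v : 'rV[R]_d, `|v| < r -> enorm v <= rho.
  move=> v hv; apply: le_trans (enorm_le_norm v) _.
  rewrite -ler_pdivlMl // mulrC; apply: ltW; by rewrite /r in hv.
have E1 := hE _ b1; have E2 := hE _ b2.
apply: le_lt_trans (hb w t Aw At) _.
have hb1 : enorm (w.1 - t.1) `^ a <= b.
  apply: le_trans (_ : _ <= rho `^ a) _.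
    by apply: (@ge0_ler_powR R a); rewrite ?nnegrE ?enorm_ge0 //; [apply: ltW | apply: ltW].
  apply: le_trans (_ : _ <= (b `^ a^-1) `^ a) _.
    apply: (@ge0_ler_powR R a); rewrite ?nnegrE ?powR_ge0 //; first exact: ltW.
      exact: ltW.
    by rewrite /rho ge_min lexx orbT.
  by rewrite -powRrM mulVf ?gt_eqF // powRr1 // ltW.
have hb2 : enorm (w.2 - t.2) <= b.
  by apply: le_trans E2 _; rewrite /rho ge_min lexx.
have hbe : (Ch + Cl) * b < e.
  have : Ct * b = e / 2 by rewrite /b /Ct; field; rewrite gt_eqF.
  rewrite /Ct; nra.
have := ler_wpM2l Ch0 hb1; have := ler_wpM2l Cl0 hb2; nra.
Unshelve. all: by end_near.
Qed.

Unset Implicit Arguments.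
Theorem lemmaC1 (R : realType) (d : nat) (p eps kappa : R) (n : nat) :
  (1 <= d)%N -> p < 1 -> p != 0 -> 0 < eps -> eps <= 2 ->
  (0 < n)%N -> 0 < kappa ->
  exists C : R,
  forall S : set 'rV[R]_d,
    closed S ->
    eball0 kappa^-1 `<=` conv_hull (S `|` [set 0]) ->
    conv_hull (S `|` [set 0]) `<=` eball0 kappa ->
    [/\ {within S `*` Oset S n, continuous (fun zx => Ifun p eps zx.1 zx.2)},
        (forall x z zh, Oset S n x -> S z -> S zh -> z != zh ->
           `|Ifun p eps z x - Ifun p eps zh x|
             <= C * powR (enorm (z - zh)) (Num.min eps 1)),
        (forall z x xh, S z -> Oset S n x -> Oset S n xh -> x != xh ->
           `|Ifun p eps z x - Ifun p eps z xh| <= C * enorm (x - xh)) &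
        (forall z x, S z -> Oset S n x -> `|Ifun p eps z x| <= C)].
Proof.
move=> d1 p1 p0 e0 e2 n0 K0.
pose c : R := n%:R^-1.
have c0 : 0 < c by rewrite /c invr_gt0 ltr0n.
have c1 : c <= 1 by rewrite /c invf_le1 ?ler1n ?ltr0n.
pose M := `|p - 1| * c `^ (p - 2).
have M0 : 0 <= M := M_ge0 p c.
pose a := Num.min eps 1.
have a0 : 0 < a by rewrite /a lt_min e0 ltr01.
pose H := 2 + kappa * (2 * kappa) `^ (1 - a).
have H0 : 0 <= H.
  by rewrite /H; apply: addr_ge0; [lra | apply: mulr_ge0; [exact: ltW | exact: powR_ge0]].
have KK0 : 0 <= kappa ^+ 2 by apply: sqr_ge0.
pose Ch := 3 * (M * kappa ^+ 2 * H).
pose Cl := M * kappa * (1 + kappa ^+ 2).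
pose Cb := M * kappa ^+ 2 * (1 + kappa ^+ 2).
have K2 : 0 <= 1 + kappa ^+ 2 by lra.
have Ch0 : 0 <= Ch.
  by rewrite /Ch; apply: mulr_ge0; [lra | apply: mulr_ge0 => //; apply: mulr_ge0].
have Cl0 : 0 <= Cl.
  by rewrite /Cl; apply: mulr_ge0 => //; apply: mulr_ge0 => //; apply: ltW.
have Cb0 : 0 <= Cb.
  by rewrite /Cb; apply: mulr_ge0 => //; apply: mulr_ge0.
exists (Ch + Cl + Cb) => S _ hin hout.
have Sb : forall z, S z -> enorm z <= kappa by move=> z; apply: S_bound.
have Ob : forall x, Oset S n x -> enorm x <= kappa by move=> x; apply: O_bound.
have Ou : forall x z, Oset S n x -> S z -> c - 1 <= dotv x z.
  by move=> x z Ox Sz; have := Ox z Sz; rewrite /c; lra.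
have hH : forall x z zh, Oset S n x -> S z -> S zh ->
    `|Ifun p eps z x - Ifun p eps zh x| <= Ch * enorm (z - zh) `^ a.
  move=> x z zh Ox Sz Szh.
  exact: (I_holder p1 p0 c0 c1 e0 e2 (Ob _ Ox) (Sb _ Sz) (Sb _ Szh) (Ou _ _ Ox Sz) (Ou _ _ Ox Szh)).
have hL : forall z x xh, S z -> Oset S n x -> Oset S n xh ->
    `|Ifun p eps z x - Ifun p eps z xh| <= Cl * enorm (x - xh).
  move=> z x xh Sz Ox Oxh.
  exact: (I_lipx p1 p0 c0 c1 e0 e2 (Ob _ Ox) (Ob _ Oxh) (Sb _ Sz) (Ou _ _ Ox Sz) (Ou _ _ Oxh Sz)).
split.
- apply: (@cont_lemma R d _ _ Ch Cl a d1 Ch0 Cl0 a0).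
  move=> [z x] [z' x'] [/= Sz Ox] [/= Sz' Ox'] /=.
  have -> : Ifun p eps z x - Ifun p eps z' x' =
    (Ifun p eps z x - Ifun p eps z' x) + (Ifun p eps z' x - Ifun p eps z' x') by ring.
  apply: le_trans (ler_normD _ _) _.
  by apply: lerD; [exact: hH | exact: hL].
- move=> x z zh Ox Sz Szh _.
  apply: le_trans (hH x z zh Ox Sz Szh) _; apply: ler_wpM2r; first exact: powR_ge0.
  lra.
- move=> z x xh Sz Ox Oxh _.
  apply: le_trans (hL z x xh Sz Ox Oxh) _; apply: ler_wpM2r; first exact: enorm_ge0.
  lra.
- move=> z x Sz Ox.
  apply: le_trans (I_bound p1 p0 c0 c1 e0 e2 (Ob _ Ox) (Sb _ Sz) (Ou _ _ Ox Sz)) _.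
  rewrite -/M -/Cb; lra.
Qed.
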